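(* Let $q$ be a prime power, and let $m$ and $j$ be positive integers with $m>1$, $1\le j\le m-1$ and $\gcd(j,q-1)=1$. Let $\lambda_j(x)=\sum_{0\le i_1<i_2<\cdots<i_j\le m-1}x^{q^{i_1}+\cdots+q^{i_j}}$ and let $h(x)\in\mathbf{F}_q[x]$. Then $x\,h(\lambda_j(x))$ is a permutation polynomial of $\mathbf{F}_{q^m}$ if and only if $h(0)\ne 0$ and $x\,h(x)^j$ permutes $\mathbf{F}_q$.
   Context: $\lambda_j(x)$ is the $j$-th elementary symmetric polynomial $\sigma_j$ evaluated at $x,x^q,\ldots,x^{q^{m-1}}$; it lies in $\mathbf{F}_q[x]$ and takes values in $\mathbf{F}_q$ on $\mathbf{F}_{q^m}$. A permutation polynomial of a finite field $K$ is a polynomial inducing a bijection $K\to K$. *)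

(* Defs.v *)
From HB Require Import structures.
From mathcomp Require Import all_boot all_order all_algebra all_field.
Set Implicit Arguments. Unset Strict Implicit. Unset Printing Implicit Defensive.
Import GRing.Theory.
Local Open Scope ring_scope.

Definition lambda_poly (F : finFieldType) (m j : nat) : {poly F} :=
  \sum_(S : {set 'I_m} | #|S| == j) 'X^(\sum_(i in S) #|F| ^ (val i))%N.

Definition is_perm_poly (F L : fieldType) (iota : {rmorphism F -> L}) (p : {poly F}) : Prop :=
  bijective (fun x : L => (map_poly iota p).[x]).

(* Main.v *)
Require Import Defs.
From HB Require Import structures.
From mathcomp Require Import all_boot all_order all_algebra all_field all_fingroup all_solvable.
From mathcomp Require Import zify.
Set Implicit Arguments. Unset Strict Implicit. Unset Printing Implicit Defensive.
Import GRing.Theory.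


Lemma digit_sum (q : nat) m (b : nat -> nat) k : 1 < q -> (forall i, b i < q) -> k < m ->
  ((\sum_(i < m) b i * q ^ i) %/ q ^ k) %% q = b k.
Proof.
move=> q1 bq; elim: k m b bq => [|k IH] [|m] b bq // km.
  rewrite big_ord_recl /= expn0 divn1 muln1.
  under eq_bigr do rewrite expnS mulnCA.
  by rewrite -big_distrr /= addnC mulnC modnMDl modn_small.
rewrite big_ord_recl /= expn0 muln1.
under eq_bigr do rewrite expnS mulnCA.
rewrite -big_distrr /= expnS divnMA addnC mulnC divnMDl ?(ltnW q1) // (divn_small (bq 0)) addn0.
exact: (IH m (fun i => b i.+1)).
Qed.

Definition ex (q m : nat) (S : {set 'I_m}) : nat := (\sum_(i in S) q ^ val i)%N.

Lemma exE q m (S : {set 'I_m}) : ex q S = \sum_(i < m) (i \in S) * q ^ i.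
Proof.
rewrite /ex big_mkcond /=; apply: eq_bigr => i _; by case: (i \in S); rewrite ?mul1n.
Qed.

Lemma ex_inj q m : 1 < q -> injective (@ex q m).
Proof.
move=> q1 S T eST; apply/setP => x.
pose b (U : {set 'I_m}) (i : nat) : nat := (i \in map val (enum U)).
have bE U (i : 'I_m) : b U i = (i \in U) by rewrite /b mem_map ?mem_enum //; exact: val_inj.
have bq U i : b U i < q by rewrite /b; case: (_ \in _) => //; exact: ltnW.
have eE U : ex q U = \sum_(i < m) b U i * q ^ i.
  by rewrite exE; apply: eq_bigr => i _; rewrite bE.
have := digit_sum q1 (bq S) (ltn_ord x); rewrite -eE eST eE digit_sum // !bE.
by case: (x \in S); case: (x \in T).
Qed.

Definition Tq (q m : nat) := (\sum_(i < m) q ^ i)%N.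

Lemma TqE q m : 0 < q -> (q - 1) * Tq q m + 1 = q ^ m.
Proof.
move=> q0; elim: m => [|m IH]; first by rewrite /Tq big_ord0 muln0.
rewrite /Tq big_ord_recr /= -/(Tq q m) mulnDr expnS.
rewrite -IH. case: q q0 {IH} => // q _. rewrite subn1 /=. nia.
Qed.

Lemma ex_lt q m (S : {set 'I_m}) (k : 'I_m) : 0 < q -> k \notin S -> ex q S < Tq q m.
Proof.
move=> q0 kS; rewrite exE /Tq (bigD1 k) //= [X in _ < X](bigD1 k) //=.
rewrite (negbTE kS) mul0n add0n.
apply: (@leq_ltn_trans (\sum_(i < m | i != k) q ^ i)); last first.
  by rewrite -[X in X < _]add0n ltn_add2r expn_gt0 q0.
apply: leq_sum => i _; case: (i \in S); rewrite ?mul1n ?mul0n //.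
Qed.

Lemma ex_gt0 q m (S : {set 'I_m}) (k : 'I_m) : 0 < q -> k \in S -> 0 < ex q S.
Proof.
move=> q0 kS; rewrite /ex (bigD1 k) //=.
by rewrite addn_gt0 expn_gt0 q0.
Qed.

Local Open Scope ring_scope.

Definition lamL (F L : finFieldType) (iota : {rmorphism F -> L}) (m j : nat) (x : L) :=
  (map_poly iota (lambda_poly F m j)).[x].

Lemma LamE (F L : finFieldType) (iota : {rmorphism F -> L}) (m j : nat) :
  map_poly iota (lambda_poly F m j) = \sum_(S : {set 'I_m} | #|S| == j) 'X^(ex #|F| S).
Proof. rewrite /lambda_poly rmorph_sum; apply: eq_bigr => S _; exact: map_polyXn. Qed.

Lemma lamLE (F L : finFieldType) (iota : {rmorphism F -> L}) (m j : nat) (x : L) :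
  lamL iota m j x = \sum_(S : {set 'I_m} | #|S| == j) \prod_(i in S) x ^+ (#|F| ^ val i).
Proof.
rewrite /lamL LamE horner_sum; apply: eq_bigr => S _; rewrite hornerXn /ex.
by rewrite (big_morph (fun n => x ^+ n) (exprD x) (expr0 x)).
Qed.

Lemma qpowD (F L : finFieldType) (iota : {rmorphism F -> L}) (x y : L) :
  (x + y) ^+ #|F| = x ^+ #|F| + y ^+ #|F|.
Proof.
have [p pr pF] := finPcharP F.
have pL : p \in [pchar L] by rewrite (fmorph_pchar iota).
have : p.-nat #|F|.
  have := abelem_pgroup (fin_ring_pchar_abelem pF); rewrite /pgroup cardsT //.
by rewrite -(eq_pnat _ (pcharf_eq pL)); exact: exprDn_pchar.
Qed.

Lemma expq_iter (F : finFieldType) (c : F) i : c ^+ (#|F| ^ i) = c.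
Proof. by elim: i => [|i IH]; rewrite ?expr1 // expnSr exprM IH expf_card. Qed.

Lemma lam_fixed (F L : finFieldType) (iota : {rmorphism F -> L}) (m j : nat)
  (hL : #|L| = (#|F| ^ m)%N) (x : L) :
  lamL iota m j x ^+ #|F| = lamL iota m j x.
Proof.
have q0 : (0 < #|F|)%N by apply/card_gt0P; exists 0.
rewrite lamLE.
have z : (0 : L) ^+ #|F| = 0 by rewrite expr0n eqn0Ngt q0.
rewrite (big_morph (fun y : L => y ^+ #|F|) (qpowD iota) z).
have step (S : {set 'I_m}) : (\prod_(i in S) x ^+ (#|F| ^ val i)) ^+ #|F| =
   \prod_(i in (@ordS m) @: S) x ^+ (#|F| ^ val i).
  rewrite big_imset /=; last by move=> a b _ _; exact: ordS_inj.
  rewrite -prodrXl; apply: eq_bigr => i _; rewrite -exprM -expnSr /=.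
  have := ltn_ord i; rewrite leq_eqVlt => /orP[/eqP ->|lt]; last by rewrite modn_small.
  by rewrite modnn expn0 expr1 -hL expf_card.
under eq_bigr do rewrite step.
rewrite [RHS](reindex_inj (imset_inj (@ordS_inj m))) /=.
by apply: eq_bigl => S; rewrite card_imset //; exact: ordS_inj.
Qed.

Lemma in_image (F L : finFieldType) (iota : {rmorphism F -> L}) (y : L) :
  y ^+ #|F| = y -> exists c, iota c = y.
Proof.
move=> yq; case: (pickP (fun c => iota c == y)) => [c /eqP <-|no]; first by exists c.
exfalso.
have q1 := finNzRing_gt1 F.
pose p : {poly L} := 'X^#|F| - 'X.
have sp : size p = #|F|.+1.
  by rewrite size_polyDl ?size_polyXn // size_polyN size_polyX.
have p0 : p != 0 by rewrite -size_poly_gt0 sp.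
have H1 : all (root p) (y :: map iota (enum F)).
  apply/allP => z; rewrite inE => /orP[/eqP ->|/mapP[c _ ->]].
    by rewrite /root !hornerE yq subrr.
  by rewrite /root !hornerE -rmorphXn expf_card subrr.
have H2 : uniq_roots (y :: map iota (enum F)).
rewrite uniq_rootsE /= map_inj_uniq ?enum_uniq; last exact: fmorph_inj.
  rewrite andbT; apply/mapP => -[c _ yc]; have := no c; by rewrite yc eqxx.
rewrite uniq_rootsE in H2; have := max_poly_roots p0 H1 H2.
by rewrite sp /= size_map -cardE ltnn.
Qed.

Definition lamF (F L : finFieldType) (iota : {rmorphism F -> L}) (m j : nat) (x : L) : F :=
  odflt 0 [pick c | iota c == lamL iota m j x].

Lemma lamFE (F L : finFieldType) (iota : {rmorphism F -> L}) (m j : nat)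
  (hL : #|L| = (#|F| ^ m)%N) (x : L) : iota (lamF iota m j x) = lamL iota m j x.
Proof.
rewrite /lamF; case: pickP => [c /eqP //|no] /=.
have [c hc] := in_image iota (@lam_fixed _ _ iota m j hL x).
by have := no c; rewrite hc eqxx.
Qed.

Lemma lam_hom (F L : finFieldType) (iota : {rmorphism F -> L}) (m j : nat) (c : F) (x : L) :
  lamL iota m j (iota c * x) = iota (c ^+ j) * lamL iota m j x.
Proof.
rewrite !lamLE mulr_sumr; apply: eq_bigr => S /eqP cS.
under eq_bigr do rewrite exprMn -rmorphXn expq_iter.
by rewrite big_split /= prodr_const cS rmorphXn.
Qed.


Lemma lam0 (F L : finFieldType) (iota : {rmorphism F -> L}) (m j : nat) :
  (1 <= j)%N -> lamL iota m j 0 = 0.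
Proof.
move=> j1; rewrite /lamL LamE horner_sum big1 // => S /eqP cS.
rewrite hornerXn expr0n.
have [k kS] : exists k, k \in S by apply/card_gt0P; rewrite cS.
have q0 : (0 < #|F|)%N by apply/card_gt0P; exists 0.
by rewrite eqn0Ngt (ex_gt0 q0 kS).
Qed.

Lemma Lam_size (F L : finFieldType) (iota : {rmorphism F -> L}) (m j : nat) :
  (j <= m - 1)%N -> (0 < m)%N -> (size (map_poly iota (lambda_poly F m j)) <= Tq #|F| m)%N.
Proof.
move=> jm m0; apply/leq_sizeP => k Tk; rewrite LamE coef_sum big1 // => S /eqP cS.
rewrite coefXn.
case: (pickP (fun k => k \notin S)) => [k0 k0S|no].
  have q0 : (0 < #|F|)%N by apply/card_gt0P; exists 0.
  have lt := ex_lt q0 k0S.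
  by case: eqP => // e; move: lt; rewrite -e ltnNge Tk.
exfalso; have : (#|[set: 'I_m]| <= #|S|)%N by apply: subset_leq_card; apply/subsetP => i _;
  have := no i; rewrite /= => /negbFE.
by rewrite cardsT card_ord cS; lia.
Qed.

Lemma Lam_neq0 (F L : finFieldType) (iota : {rmorphism F -> L}) (m j : nat) :
  (j <= m)%N -> map_poly iota (lambda_poly F m j) != 0.
Proof.
move=> jm; pose S0 : {set 'I_m} := [set widen_ord jm i | i : 'I_j].
have cS0 : #|S0| = j by rewrite card_imset ?card_ord //; move=> a b e; apply/val_inj; exact: (congr1 val e).
have q1 := finNzRing_gt1 F.
apply/negP => /eqP H; have := congr1 (fun p : {poly L} => p`_(ex #|F| S0)) H; rewrite /= coef0 LamE coef_sum.
rewrite (bigD1 S0) ?cS0 //= coefXn eqxx big1 ?addr0; first exact/eqP/oner_neq0.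
move=> S /andP[_ nS]; rewrite coefXn; case: eqP => // e.
by move/eqP: nS; case; apply: (ex_inj q1).
Qed.

Lemma jroot (F : finFieldType) (j : nat) : (0 < j)%N -> coprime j (#|F|).-1 ->
  forall c : F, exists d, d ^+ j = c.
Proof.
move=> j0 cop c; case: (egcdnP (#|F|).-1 j0) => km kn E _.
exists (c ^+ km); rewrite -exprM E (eqP cop).
clear E; elim: kn => [|n IH]; first by rewrite mul0n add0n expr1.
rewrite mulSn -addnA exprD IH -exprSr prednK ?expf_card //.
by apply/card_gt0P; exists 0.
Qed.


Lemma Tq_gt0 q m : (0 < m)%N -> (0 < Tq q m)%N.
Proof. by case: m => // m _; rewrite /Tq big_ord_recl /= expn0. Qed.

Lemma fiber_lt (F L : finFieldType) (iota : {rmorphism F -> L}) (m j : nat)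
  (m0 : (0 < m)%N) (jm : (j <= m - 1)%N) (j1 : (1 <= j)%N) (y : L) :
  y != 0 -> (#|[set x | lamL iota m j x == y]| < Tq #|F| m)%N.
Proof.
move=> y0; pose p := map_poly iota (lambda_poly F m j) - y%:P.
have pE x : p.[x] = lamL iota m j x - y by rewrite /p !hornerE.
have p0 : p != 0.
  by apply/negP => /eqP H; move: (pE 0); rewrite H horner0 lam0 // sub0r => /eqP;
     rewrite eq_sym oppr_eq0 (negbTE y0).
have sp : (size p <= Tq #|F| m)%N.
  apply: (leq_trans (size_polyD _ _)); rewrite geq_max Lam_size //= size_polyN.
  by apply: (leq_trans (size_polyC_leq1 _)); exact: Tq_gt0.
apply: leq_trans sp; rewrite cardE.
apply: max_poly_roots => //; last exact: enum_uniq.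
by apply/allP => x; rewrite mem_enum inE /root pE subr_eq0.
Qed.

Lemma exists_nz (F L : finFieldType) (iota : {rmorphism F -> L}) (m j : nat)
  (hL : #|L| = (#|F| ^ m)%N) (m0 : (0 < m)%N) (jm : (j <= m - 1)%N) :
  exists x, lamL iota m j x != 0.
Proof.
case: (pickP (fun x => lamL iota m j x != 0)) => [x hx|no]; first by exists x.
exfalso.
have jm' : (j <= m)%N by lia.
have := max_poly_roots (Lam_neq0 iota jm') (rs := enum L).
have H1 : all (root (map_poly iota (lambda_poly F m j))) (enum L).
  by apply/allP => x _; have := no x; rewrite /= /root => /negbFE.
rewrite H1 enum_uniq -cardE => /(_ isT isT) lt.
have := leq_trans lt (Lam_size iota jm m0).
have q0 : (0 < #|F|)%N by apply/card_gt0P; exists 0.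
have := TqE m q0.
have q1 := finNzRing_gt1 F.
rewrite hL; move: (Tq _ _) (_ ^ m)%N => T Q.
have : (1 <= #|F| - 1)%N by rewrite subn_gt0; exact: q1.
move: (#|F| - 1)%N => a; nia.
Qed.

Lemma exists_zero (F L : finFieldType) (iota : {rmorphism F -> L}) (m j : nat)
  (hL : #|L| = (#|F| ^ m)%N) (m1 : (1 < m)%N) (j1 : (1 <= j)%N) (jm : (j <= m - 1)%N) :
  exists x, (x != 0) && (lamL iota m j x == 0).
Proof.
case: (pickP (fun x => (x != 0) && (lamL iota m j x == 0))) => [x hx|no]; first by exists x.
exfalso.
have m0 : (0 < m)%N by lia.
have cnt : #|L| = (\sum_(c : F) #|[set x | lamF iota m j x == c]|)%N.
  rewrite -sum1_card (partition_big (lamF iota m j) predT) //=.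
  by apply: eq_bigr => c _; rewrite sum1dep_card; apply: eq_card => x; rewrite !inE.
rewrite (bigD1 0) //= in cnt.
have f0 : (#|[set x | lamF iota m j x == (0%R:F)]| <= 1)%N.
  rewrite -(cards1 (0 : L)); apply: subset_leq_card; apply/subsetP => x.
  rewrite !inE => /eqP e; have := no x; rewrite /= -(@lamFE _ _ iota m j hL) e rmorph0 eqxx andbT.
  by move/negbFE.
have fc : (\sum_(c | c != (0%R:F)) #|[set x | lamF iota m j x == c]| <= 
           \sum_(c | c != (0%R:F)) (Tq #|F| m - 1))%N.
  apply: leq_sum => c c0.
  rewrite (@eq_card _ _ [set x | lamL iota m j x == iota c]); last first.
    by move=> x; rewrite !inE -(@lamFE _ _ iota m j hL) (inj_eq (fmorph_inj iota)).
  have := fiber_lt iota m0 jm j1 (y := iota c); rewrite fmorph_eq0 => /(_ c0); lia.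
rewrite sum_nat_const cardC1 in fc.
have q0 : (0 < #|F|)%N by apply/card_gt0P; exists 0.
have := TqE m q0.
have q1 := finNzRing_gt1 F.
have T1 := Tq_gt0 #|F| m0.
have a1 : (1 <= #|F| - 1)%N by rewrite subn_gt0; exact: q1.
have pq : (#|F|).-1 = (#|F| - 1)%N by rewrite subn1.
rewrite pq in fc; rewrite hL in cnt.
have E1 : (#|F| ^ m <= 1 + (#|F| - 1) * (Tq #|F| m - 1))%N.
  rewrite cnt; move: fc f0; move: ((#|F| - 1) * (Tq #|F| m - 1))%N => K h1 h2; exact: leq_add h2 h1.
move: E1 a1 T1; move: (Tq _ _) (#|F| - 1)%N (#|F| ^ m)%N => T a Q. nia.
Qed.


Theorem theorem3p1 (F L : finFieldType) (iota : {rmorphism F -> L}) (m j : nat)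
  (hL : #|L| = (#|F| ^ m)%N) (hm : (1 < m)%N) (hj1 : (1 <= j)%N) (hj2 : (j <= m - 1)%N)
  (hcop : coprime j (#|F|).-1) (h : {poly F}) :
  is_perm_poly iota ('X * (h \Po lambda_poly F m j))
  <-> (h.[0] != 0 /\ bijective (fun x : F => x * (h.[x]) ^+ j)).
Proof.
pose lF := lamF iota m j.
have lFE x : iota (lF x) = lamL iota m j x := @lamFE _ _ iota m j hL x.
pose f' := fun x : L => x * iota (h.[lF x]).
have fE : (fun x => (map_poly iota ('X * (h \Po lambda_poly F m j))).[x]) =1 f'.
  move=> x; rewrite /f' rmorphM /= map_polyX map_comp_poly hornerM hornerX horner_comp.
  by rewrite -/(lamL iota m j x) -lFE horner_map.
pose g := fun x : F => x * (h.[x]) ^+ j.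
have key x : lF (f' x) = g (lF x).
  apply: (fmorph_inj iota); rewrite lFE /f' mulrC lam_hom -lFE -rmorphM mulrC.
  by [].
have lF0 : lF 0 = 0 by apply: (fmorph_inj iota); rewrite lFE lam0 // rmorph0.
rewrite /is_perm_poly; split.
- move=> fb0; have fb : bijective f' := eq_bij fb0 fE.
  have finj := bij_inj fb.
  split.
    have [x1 /andP[x10 /eqP lx1]] := exists_zero iota hL hm hj1 hj2.
    have l1 : lF x1 = 0 by apply: (fmorph_inj iota); rewrite lFE lx1 rmorph0.
    apply/negP => /eqP h0; move/negP: x10; apply; apply/eqP; apply: finj.
    by rewrite /f' l1 lF0 h0 rmorph0 !mulr0.
  have m0 : (0 < m)%N by lia.
  have [x0 x0nz] := exists_nz iota hL m0 hj2.
  have c0nz : lF x0 != 0 by rewrite -(fmorph_eq0 iota) lFE.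
  have lsurj c : exists x, lF x = c.
    have [d dj] := jroot hj1 hcop (c / lF x0).
    exists (iota d * x0); apply: (fmorph_inj iota).
    by rewrite lFE lam_hom -lFE -rmorphM dj divfK.
  have gsurj c : exists d, g d = c.
    have [x lx] := lsurj c; case: fb => fi fK Kf.
    by exists (lF (fi x)); rewrite -key Kf.
  pose s := fun c => odflt 0 [pick d | g d == c].
  have sK : cancel s g.
    move=> c; rewrite /s; case: pickP => [d /eqP //|no] /=.
    by have [d gd] := gsurj c; have := no d; rewrite /= gd eqxx.
  have sb : bijective s by apply: injF_bij; exact: can_inj sK.
  case: sb => s' s'K Ks'.
  exists s => [x|//]; change (s (g x) = x); rewrite -{1}(Ks' x) sK Ks' //.
- case=> h0 gb; have ginj := bij_inj gb.
  have hnz c : h.[c] != 0.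
    have [->|c0] := eqVneq c 0; first exact: h0.
    apply/negP => /eqP hc; move/negP: c0; apply; apply/eqP; apply: ginj.
    by rewrite /g hc expr0n eqn0Ngt hj1 mulr0 mul0r.
  apply: (@eq_bij _ _ f'); last by move=> x; rewrite fE.
  apply: injF_bij => x y e.
  have := congr1 lF e; rewrite !key => /ginj lxy.
  move: e; rewrite /f' lxy; apply: mulIf.
  by rewrite fmorph_eq0.
Qed.
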